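(* Let $X,X',Y,Y'$ be nonnegative bivariate random vectors with absolutely continuous joint distribution functions $F,F',G,G'$, respectively, where for $i=1,2$, $Y_i=a_iX_i+c_i$ and $Y_i'=a_iX_i'+d_i$ with $a_i>0$ and $d_i\ge c_i>0$. Suppose $X\le_{CDCPE}X'$ and that either $\overline\varepsilon^*_i(X;t_1,t_2)$ (for $i=1,2$) or $\overline\varepsilon^*_i(X';t_1,t_2)$ (for $i=1,2$) is increasing in $t_1$ and increasing in $t_2$. Then $Y\le_{CDCPE}Y'$, i.e. $\overline\varepsilon^*_i(Y;t_1,t_2)\ge\overline\varepsilon^*_i(Y';t_1,t_2)$ for $i=1,2$ and all $t_1\ge d_1$, $t_2\ge d_2$ where defined.
   Context: For a nonnegative random vector $X$ with joint distribution function $F(x_1,x_2)=P(X_1\le x_1,X_2\le x_2)$ and $t_1,t_2>0$ with $F(t_1,t_2)>0$, the conditional dynamic cumulative past entropies (CDCPE) are $$\overline\varepsilon^*_1(X;t_1,t_2)=-\int_0^{t_1}\frac{F(x_1,t_2)}{F(t_1,t_2)}\log\frac{F(x_1,t_2)}{F(t_1,t_2)}dx_1,\qquad \overline\varepsilon^*_2(X;t_1,t_2)=-\int_0^{t_2}\frac{F(t_1,x_2)}{F(t_1,t_2)}\log\frac{F(t_1,x_2)}{F(t_1,t_2)}dx_2,$$ with $0\log0=0$. For nonnegative bivariate random vectors $X,Y$, we write $X\geq_{CDCPE}Y$ (equivalently $Y\le_{CDCPE}X$) if $\overline\varepsilon^*_i(X;t_1,t_2)\le\overline\varepsilon^*_i(Y;t_1,t_2)$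 for all $t_1,t_2\ge0$ (where defined) and $i=1,2$. *)

(* Defs.v *)
From Stdlib Require Import Reals Lra List ClassicalEpsilon.
Open Scope R_scope.

(* Total Riemann integral: RiemannInt if f is Riemann integrable on [a,b], else 0. *)
Definition RInt (f : R -> R) (a b : R) : R :=
  match excluded_middle_informative (inhabited (Riemann_integrable f a b)) with
  | left H => RiemannInt (epsilon H (fun _ => True))
  | right _ => 0
  end.

(* u log u with the convention 0 log 0 = 0 *)
Definition xlnx (u : R) : R := if Rle_dec u 0 then 0 else u * ln u.

(* F-measure of the half-open rectangle (a1,b1] x (a2,b2] *)
Definition rect_mass (F : R -> R -> R) (a1 b1 a2 b2 : R) : R :=
  F b1 b2 - F a1 b2 - F b1 a2 + F a1 a2.

Definition nonneg_bivariate_cdf (F : R -> R -> R) : Prop :=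
  (forall a1 b1 a2 b2, a1 <= b1 -> a2 <= b2 -> 0 <= rect_mass F a1 b1 a2 b2) /\
  (forall x1 x2, x1 < 0 \/ x2 < 0 -> F x1 x2 = 0) /\
  (forall x1 x2 eps, 0 < eps -> exists delta, 0 < delta /\
     forall y1 y2, x1 <= y1 < x1 + delta -> x2 <= y2 < x2 + delta ->
       Rabs (F y1 y2 - F x1 x2) < eps) /\
  (forall eps, 0 < eps -> exists M, forall x1 x2, M <= x1 -> M <= x2 ->
       Rabs (F x1 x2 - 1) < eps).

Record rect := mkRect { r_a1 : R; r_b1 : R; r_a2 : R; r_b2 : R }.
Definition rect_ok (r : rect) : Prop := r_a1 r <= r_b1 r /\ r_a2 r <= r_b2 r.
Definition rect_disjoint (r s : rect) : Prop :=
  r_b1 r <= r_a1 s \/ r_b1 s <= r_a1 r \/ r_b2 r <= r_a2 s \/ r_b2 s <= r_a2 r.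
Definition rect_area (r : rect) : R := (r_b1 r - r_a1 r) * (r_b2 r - r_a2 r).

(* Absolute continuity of the induced measure w.r.t. Lebesgue measure
   (Vitali-type epsilon-delta formulation over finite disjoint rectangle unions). *)
Definition abs_continuous_cdf (F : R -> R -> R) : Prop :=
  forall eps, 0 < eps -> exists delta, 0 < delta /\
    forall l : list rect, Forall rect_ok l -> ForallOrdPairs rect_disjoint l ->
      fold_right (fun r acc => rect_area r + acc) 0 l < delta ->
      fold_right (fun r acc => rect_mass F (r_a1 r) (r_b1 r) (r_a2 r) (r_b2 r) + acc) 0 l < eps.

Definition ac_nonneg_cdf (F : R -> R -> R) : Prop :=
  nonneg_bivariate_cdf F /\ abs_continuous_cdf F.

Definition cdcpe1 (F : R -> R -> R) (t1 t2 : R) : R :=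
  - RInt (fun x1 => xlnx (F x1 t2 / F t1 t2)) 0 t1.
Definition cdcpe2 (F : R -> R -> R) (t1 t2 : R) : R :=
  - RInt (fun x2 => xlnx (F t1 x2 / F t1 t2)) 0 t2.

(* cdcpe_le FX FY  means  X <=_CDCPE Y, i.e. eps*_i(X) >= eps*_i(Y)
   wherever both are defined. *)
Definition cdcpe_le (FX FY : R -> R -> R) : Prop :=
  forall t1 t2, 0 <= t1 -> 0 <= t2 -> 0 < FX t1 t2 -> 0 < FY t1 t2 ->
    cdcpe1 FY t1 t2 <= cdcpe1 FX t1 t2 /\ cdcpe2 FY t1 t2 <= cdcpe2 FX t1 t2.

Definition cdcpe_increasing (F : R -> R -> R) : Prop :=
  (forall t1 t1' t2, 0 < F t1 t2 -> t1 <= t1' ->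
     cdcpe1 F t1 t2 <= cdcpe1 F t1' t2 /\ cdcpe2 F t1 t2 <= cdcpe2 F t1' t2) /\
  (forall t1 t2 t2', 0 < F t1 t2 -> t2 <= t2' ->
     cdcpe1 F t1 t2 <= cdcpe1 F t1 t2' /\ cdcpe2 F t1 t2 <= cdcpe2 F t1 t2').

(* Main.v *)
Require Import Defs.
From Stdlib Require Import Reals Lra ClassicalEpsilon FunctionalExtensionality.
From Coquelicot Require Import Coquelicot.
Open Scope R_scope.

Lemma ln_le_sub1 x : 0 < x -> ln x <= x - 1.
Proof.
  intro Hx. destruct (Req_dec (ln x) 0) as [H|H].
  - assert (x = 1). { rewrite <- (exp_ln x Hx), H. apply exp_0. } lra.
  - pose proof (exp_ineq1 _ H). rewrite exp_ln in H0 by lra. lra.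
Qed.

Lemma xlnx_0 : xlnx 0 = 0.
Proof. unfold xlnx. destruct (Rle_dec 0 0); lra. Qed.

Lemma xlnx_nonpos r : 0 <= r <= 1 -> xlnx r <= 0.
Proof.
  intros H. unfold xlnx. destruct (Rle_dec r 0). lra.
  assert (ln r <= 0). { rewrite <- ln_1. apply ln_le; lra. }
  assert (0 <= r * - ln r) by (apply Rmult_le_pos; lra). lra.
Qed.

Lemma xlnx_ge_m1 r : 0 <= r <= 1 -> -1 <= xlnx r.
Proof.
  intros H. unfold xlnx. destruct (Rle_dec r 0). lra.
  assert (Hr : 0 < r) by lra.
  pose proof (ln_le_sub1 (/ r) (Rinv_0_lt_compat _ Hr)). rewrite ln_Rinv in H0 by lra.
  assert (r * (- ln r) <= r * (/ r - 1)) by (apply Rmult_le_compat_l; lra).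
  replace (r * (/ r - 1)) with (1 - r) in H1 by (field; lra). lra.
Qed.

Lemma xlnx_upper al r : 0 < al <= r -> r <= / 2 -> xlnx r <= - (al * ln 2).
Proof.
  intros H1 H2. unfold xlnx. destruct (Rle_dec r 0). lra.
  assert (ln 2 <= ln (/ r)). { apply ln_le. lra. rewrite <- (Rinv_inv 2). apply Rinv_le_contravar; lra. }
  rewrite ln_Rinv in H by lra.
  assert (0 < ln 2) by (pose proof ln_lt_2; lra).
  assert (al * ln 2 <= r * ln 2) by (apply Rmult_le_compat_r; lra).
  assert (r * ln 2 <= r * - ln r) by (apply Rmult_le_compat_l; lra). lra.
Qed.

Lemma xlnx_small y : 0 < y <= 1 -> Rabs (xlnx y) <= 2 * sqrt y.
Proof.
  intros [Hy Hy1]. unfold xlnx. destruct (Rle_dec y 0). lra.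
  pose proof (sqrt_lt_R0 _ Hy) as Hs.
  assert (Hyy : y = sqrt y * sqrt y) by (rewrite sqrt_sqrt; lra).
  assert (Hln : ln y = 2 * ln (sqrt y)).
  { rewrite Hyy at 1. rewrite ln_mult by lra. ring. }
  assert (ln y <= 0). { rewrite <- ln_1. apply ln_le; lra. }
  rewrite Rabs_left1. 2: { assert (0 <= y * - ln y) by (apply Rmult_le_pos; lra). lra. }
  pose proof (ln_le_sub1 (/ sqrt y) (Rinv_0_lt_compat _ Hs)).
  rewrite ln_Rinv in H0 by lra.
  assert (- ln y <= 2 * (/ sqrt y - 1)) by lra.
  assert (y * - ln y <= y * (2 * (/ sqrt y - 1))) by (apply Rmult_le_compat_l; lra).
  assert (y * (2 * (/ sqrt y - 1)) = 2 * sqrt y - 2 * y).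
  { set (s := sqrt y) in *. rewrite Hyy. field. lra. }
  lra.
Qed.

Lemma xlnx_cont x : continuity_pt xlnx x.
Proof.
  unfold continuity_pt, continue_in, limit1_in, limit_in; simpl; unfold R_dist.
  intros eps Heps.
  destruct (Rtotal_order x 0) as [Hx|[Hx|Hx]].
  - exists (- x). split. lra. intros y [_ Hy].
    assert (y < 0) by (apply Rabs_def2 in Hy; lra).
    unfold xlnx. destruct (Rle_dec y 0); destruct (Rle_dec x 0); try lra.
    rewrite Rminus_0_r, Rabs_R0. lra.
  - subst x. exists (Rmin 1 ((eps/2)*(eps/2))). split.
    { apply Rmin_pos; try lra. apply Rmult_lt_0_compat; lra. }
    intros y [_ Hy]. rewrite xlnx_0, Rminus_0_r. rewrite Rminus_0_r in Hy.
    destruct (Rle_dec y 0) as [Hy0|Hy0].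
    { unfold xlnx. destruct (Rle_dec y 0); try lra. rewrite Rabs_R0; lra. }
    assert (Hy' : Rabs y = y) by (apply Rabs_right; lra). rewrite Hy' in Hy.
    pose proof (Rmin_l 1 ((eps/2)*(eps/2))). pose proof (Rmin_r 1 ((eps/2)*(eps/2))).
    pose proof (xlnx_small y ltac:(lra)).
    assert (sqrt y < eps / 2).
    { rewrite <- (sqrt_square (eps/2)) by lra. apply sqrt_lt_1; try lra. }
    lra.
  - assert (Hc : continuity_pt (fun y => y * ln y) x).
    { apply continuity_pt_mult. apply derivable_continuous_pt, derivable_pt_id.
      apply derivable_continuous_pt. exists (/ x). apply derivable_pt_lim_ln. lra. }
    unfold continuity_pt, continue_in, limit1_in, limit_in in Hc; simpl in Hc; unfold R_dist in Hc.
    destruct (Hc eps Heps) as [al [Hal Hal2]].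
    exists (Rmin al x). split. apply Rmin_pos; lra.
    intros y [_ Hy]. pose proof (Rmin_l al x). pose proof (Rmin_r al x).
    assert (0 < y) by (apply Rabs_def2 in Hy; lra).
    unfold xlnx. destruct (Rle_dec y 0); destruct (Rle_dec x 0); try lra.
    destruct (Req_dec y x) as [->|Hne].
    { unfold Rminus. rewrite Rplus_opp_r, Rabs_R0. lra. }
    apply Hal2. split. split. exact I. auto. lra.
Qed.

Definition P3 (F : R -> R -> R) : Prop :=
  (forall a1 b1 a2 b2, a1 <= b1 -> a2 <= b2 -> 0 <= rect_mass F a1 b1 a2 b2) /\
  (forall x1 x2, x1 < 0 \/ x2 < 0 -> F x1 x2 = 0) /\
  (forall eps, 0 < eps -> exists delta, 0 < delta /\
     forall a1 b1 a2 b2, a1 <= b1 -> a2 <= b2 -> (b1 - a1) * (b2 - a2) < delta ->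
       rect_mass F a1 b1 a2 b2 < eps).

Lemma ac_P3 F : ac_nonneg_cdf F -> P3 F.
Proof.
  intros [[H1 [H2 _]] H4]. split; [exact H1|split; [exact H2|]].
  intros eps Heps. destruct (H4 eps Heps) as [d [Hd Hd2]]. exists d. split; auto.
  intros a1 b1 a2 b2 Ha Hb Har.
  specialize (Hd2 (cons (mkRect a1 b1 a2 b2) nil)).
  simpl in Hd2. rewrite !Rplus_0_r in Hd2. apply Hd2.
  - constructor. split; simpl; auto. constructor.
  - constructor. constructor. constructor.
  - unfold rect_area; simpl. exact Har.
Qed.

Lemma P3_swap F : P3 F -> P3 (fun x y => F y x).
Proof.
  intros [H1 [H2 H3]]. split; [|split].
  - intros. specialize (H1 a2 b2 a1 b1 H0 H). unfold rect_mass in *. lra.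
  - intros. apply H2. tauto.
  - intros eps Heps. destruct (H3 eps Heps) as [d [Hd Hd2]]. exists d. split; auto.
    intros. specialize (Hd2 a2 b2 a1 b1 H0 H). unfold rect_mass in *.
    rewrite Rmult_comm in H4. specialize (Hd2 H4). lra.
Qed.

Definition good (phi : R -> R) : Prop :=
  (forall u v, u <= v -> phi u <= phi v) /\ (forall u, u <= 0 -> phi u = 0) /\
  (forall x, continuity_pt phi x).

Lemma good_nonneg phi : good phi -> forall u, 0 <= phi u.
Proof.
  intros [Hm [Hz _]] u. destruct (Rle_dec u 0). rewrite Hz; lra.
  pose proof (Hm 0 u ltac:(lra)). rewrite (Hz 0) in H by lra. lra.
Qed.

Lemma P3_good F : P3 F -> forall x2, good (fun u => F u x2).
Proof.
  intros [H1 [H2 H3]] x2.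
  destruct (Rlt_le_dec x2 0) as [Hx2|Hx2].
  { split; [|split].
    - intros. rewrite !H2 by tauto. lra.
    - intros. apply H2. tauto.
    - intro x. apply continuity_pt_const. intros a b. rewrite !H2 by tauto. auto. }
  assert (Hmono : forall u v, u <= v -> F u x2 <= F v x2).
  { intros u v Huv. specialize (H1 u v (-1) x2 Huv ltac:(lra)). unfold rect_mass in H1.
    rewrite (H2 v (-1)), (H2 u (-1)) in H1 by lra. lra. }
  assert (Hsmall : forall eps, 0 < eps -> exists al, 0 < al /\
     forall u v, u <= v -> v - u < al -> F v x2 - F u x2 < eps).
  { intros eps Heps. destruct (H3 eps Heps) as [d [Hd Hd2]].
    exists (d / (x2 + 1)). split. apply Rdiv_lt_0_compat; lra.
    intros u v Huv Hvu. specialize (Hd2 u v (-1) x2 Huv ltac:(lra)).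
    unfold rect_mass in Hd2. rewrite (H2 v (-1)), (H2 u (-1)) in Hd2 by lra.
    cut (F v x2 - F u x2 - 0 + 0 < eps). lra. apply Hd2.
    apply (Rmult_lt_compat_r (x2 + 1)) in Hvu; [|lra].
    unfold Rdiv in Hvu. rewrite Rmult_assoc, Rinv_l, Rmult_1_r in Hvu by lra. lra. }
  split; [exact Hmono|split].
  - intros u Hu. destruct (Rlt_le_dec u 0). apply H2; tauto.
    assert (u = 0) by lra. subst u.
    assert (0 <= F 0 x2). { pose proof (Hmono (-1) 0 ltac:(lra)). rewrite (H2 (-1) x2) in H by lra. lra. }
    destruct (Rle_lt_or_eq_dec _ _ H) as [Hp|He]; auto.
    destruct (Hsmall _ Hp) as [al [Hal Hal2]].
    specialize (Hal2 (- al/2) 0 ltac:(lra) ltac:(lra)). rewrite (H2 (-al/2) x2) in Hal2 by lra. lra.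
  - intros x. unfold continuity_pt, continue_in, limit1_in, limit_in; simpl; unfold R_dist.
    intros eps Heps. destruct (Hsmall eps Heps) as [al [Hal Hal2]]. exists al. split. lra.
    intros y [_ Hy]. destruct (Rle_dec x y).
    + rewrite Rabs_right in Hy by lra. pose proof (Hmono x y r). pose proof (Hal2 x y r Hy).
      rewrite Rabs_right by lra. lra.
    + rewrite Rabs_left in Hy by lra. pose proof (Hmono y x ltac:(lra)). pose proof (Hal2 y x ltac:(lra) ltac:(lra)).
      rewrite Rabs_left1 by lra. lra.
Qed.

Lemma ac_good1 F : ac_nonneg_cdf F -> forall x2, good (fun u => F u x2).
Proof. intros H. apply P3_good, ac_P3, H. Qed.
Lemma ac_good2 F : ac_nonneg_cdf F -> forall x1, good (fun u => F x1 u).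
Proof. intros H x1. exact (P3_good _ (P3_swap _ (ac_P3 _ H)) x1). Qed.

Definition E (phi : R -> R) (t : R) : R := - Defs.RInt (fun x => xlnx (phi x / phi t)) 0 t.

Lemma DRInt_eq f a b : a <= b -> ex_RInt f a b -> Defs.RInt f a b = RInt f a b.
Proof.
  intros Hab Hex. unfold Defs.RInt.
  destruct (excluded_middle_informative _) as [H|H].
  - symmetry. apply RInt_Reals.
  - exfalso. apply H. constructor. apply ex_RInt_Reals_0. exact Hex.
Qed.

Lemma integrand_cont phi c : good phi -> forall x, continuous (fun x => xlnx (phi x / c)) x.
Proof.
  intros Hg x. apply continuity_pt_filterlim.
  change (continuity_pt (comp xlnx (fun x => phi x / c)) x).
  apply continuity_pt_comp. 2: apply xlnx_cont.
  change (continuity_pt (mult_fct phi (fun _ => / c)) x).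
  apply continuity_pt_mult. apply Hg. apply continuity_pt_const. intros a b; auto.
Qed.

Lemma integrand_ex phi c a b : good phi -> ex_RInt (fun x => xlnx (phi x / c)) a b.
Proof. intros Hg. apply (ex_RInt_continuous (V:=R_CompleteNormedModule)). intros. apply integrand_cont, Hg. Qed.

Lemma E_eq phi t : good phi -> 0 <= t -> E phi t = - RInt (fun x => xlnx (phi x / phi t)) 0 t.
Proof. intros Hg Ht. unfold E. rewrite DRInt_eq; auto. apply integrand_ex, Hg. Qed.

Lemma Scale phi a c t : good phi -> 0 < a -> 0 <= c -> c <= t ->
  E (fun x => phi ((x - c) / a)) t = a * E phi ((t - c) / a).
Proof.
  intros Hg Ha Hc Hct. set (s := (t - c) / a).
  assert (Hs : 0 <= s). { unfold s. apply Rmult_le_pos; [lra| left; apply Rinv_0_lt_compat; lra]. }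
  rewrite (E_eq phi s) by auto.
  set (h := fun u => xlnx (phi u / phi s)).
  assert (Hh : forall u v, ex_RInt h u v) by (intros; apply integrand_ex, Hg).
  assert (Hhc : forall u, continuous h u) by (intros; apply integrand_cont, Hg).
  unfold E. change (- Defs.RInt (fun x => h ((x - c) / a)) 0 t = a * - RInt h 0 s).
  rewrite DRInt_eq.
  2: lra.
  2: { apply (ex_RInt_continuous (V:=R_CompleteNormedModule)). intros z _. eapply continuous_comp; [| apply Hhc].
       apply continuity_pt_filterlim, derivable_continuous_pt. reg. }
  change (- RInt (fun x => h ((x - c) / a)) 0 t = a * - RInt h 0 s).
  assert (H1 : RInt (fun x => h ((x - c) / a)) 0 t = a * RInt h (- c / a) s).
  { transitivity (a * RInt (fun y => scal (/ a) (h (/ a * y + - c / a))) 0 t).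
    { rewrite (RInt_scal (V:=R_CompleteNormedModule) (fun y => h (/ a * y + - c / a))).
      2: { apply (ex_RInt_continuous (V:=R_CompleteNormedModule)). intros z _. eapply continuous_comp; [| apply Hhc].
           apply continuity_pt_filterlim, derivable_continuous_pt. reg. }
      unfold scal; simpl; unfold mult; simpl.
      rewrite <- Rmult_assoc, Rinv_r, Rmult_1_l by lra.
      apply RInt_ext. intros x _. f_equal. field. lra. }
    f_equal. etransitivity. exact (RInt_comp_lin (V:=R_CompleteNormedModule) h (/ a) (- c / a) 0 t (Hh _ _)).
    f_equal. field; lra. unfold s; field; lra. }
  rewrite H1.
  rewrite <- (RInt_Chasles h (- c / a) 0 s) by apply Hh.
  assert (H0 : RInt h (- c / a) 0 = 0).
  { rewrite (RInt_ext h (fun _ => 0)). rewrite RInt_const. unfold scal; simpl; unfold mult; simpl; ring.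
    intros x Hx. assert (x < 0).
    { assert (- c / a <= 0).
      { assert (0 <= c / a) by (apply Rmult_le_pos; [lra| left; apply Rinv_0_lt_compat; lra]).
        replace (- c / a) with (- (c / a)) by (field; lra). lra. }
      rewrite Rmax_right in Hx by lra. lra. }
    unfold h. destruct Hg as [_ [Hz _]]. rewrite Hz by lra. unfold Rdiv. rewrite Rmult_0_l. apply xlnx_0. }
  rewrite H0. unfold plus; simpl. ring.
Qed.

Lemma ratio01 phi x t : good phi -> x <= t -> 0 < phi t -> 0 <= phi x / phi t <= 1.
Proof.
  intros Hg Hxt Ht. pose proof (good_nonneg _ Hg x). destruct Hg as [Hm _].
  pose proof (Hm _ _ Hxt). split.
  - apply Rmult_le_pos; auto. left; apply Rinv_0_lt_compat; auto.
  - apply (Rmult_le_reg_r (phi t)); auto. unfold Rdiv. rewrite Rmult_assoc, Rinv_l by lra. lra.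
Qed.

Lemma div_le_div a b c d : 0 < b -> 0 < d -> a * d <= c * b -> a / b <= c / d.
Proof.
  intros Hb Hd H.
  replace (a / b) with (a * d * / (b * d)) by (field; lra).
  replace (c / d) with (c * b * / (b * d)) by (field; lra).
  apply Rmult_le_compat_r; auto. left; apply Rinv_0_lt_compat, Rmult_lt_0_compat; auto.
Qed.

Lemma RInt_R_const c a b : RInt (fun _ => c) a b = (b - a) * c.
Proof. rewrite RInt_const. reflexivity. Qed.

Lemma Chasles3 (h : R -> R) a b c : (forall u v, ex_RInt h u v) -> RInt h a c = RInt h a b + RInt h b c.
Proof. intros Hh. rewrite <- (RInt_Chasles (V:=R_CompleteNormedModule) h a b c) by apply Hh. reflexivity. Qed.

Lemma Upper phi p t : good phi -> 0 <= p <= t -> phi p = 0 -> 0 < phi t -> E phi t <= t - p.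
Proof.
  intros Hg Hp Hp0 Ht. rewrite E_eq by (auto; lra).
  set (h := fun x => xlnx (phi x / phi t)).
  assert (Hh : forall u v, ex_RInt h u v) by (intros; apply integrand_ex, Hg).
  rewrite (Chasles3 h 0 p t Hh).
  assert (H0 : RInt h 0 p = 0).
  { rewrite (RInt_ext h (fun _ => 0)). rewrite RInt_R_const. apply Rmult_0_r.
    intros x Hx. rewrite Rmin_left, Rmax_right in Hx by lra.
    unfold h. pose proof (good_nonneg _ Hg x). destruct Hg as [Hm _].
    pose proof (Hm x p ltac:(lra)). replace (phi x) with 0 by lra.
    unfold Rdiv. rewrite Rmult_0_l. apply xlnx_0. }
  assert (H1 : RInt (fun _ => -1) p t <= RInt h p t).
  { apply RInt_le. lra. apply ex_RInt_const. apply Hh.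
    intros x Hx. apply xlnx_ge_m1, ratio01; auto; lra. }
  rewrite RInt_R_const in H1. lra.
Qed.

Lemma Lower phi y z : good phi -> 0 <= y <= z -> 0 < phi y ->
  exists k, 0 < k /\ forall t, y <= t <= z -> k <= E phi t.
Proof.
  intros Hg Hyz Hy. set (q := phi y). set (P := phi z).
  pose proof (good_nonneg _ Hg) as Hnn.
  pose proof Hg as [Hm [Hz Hc]].
  assert (HqP : q <= P) by (apply Hm; lra).
  assert (Hy0 : 0 < y). { destruct (Rle_dec y 0). rewrite (Hz y) in Hy; lra. lra. }
  destruct (IVT (fun x => phi x - q / 3) 0 y) as [w [Hw Hw2]].
  { intro x. apply continuity_pt_minus. apply Hc. apply continuity_pt_const. intros a b; auto. }
  lra. rewrite Hz by lra. unfold q; lra. unfold q; lra.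
  simpl in Hw2.
  assert (Hw0 : 0 < w). { destruct (Req_dec w 0). subst. rewrite Hz in Hw2 by lra. unfold q in *; lra. lra. }
  assert (Hwy : w < y). { destruct (Req_dec w y). subst. unfold q in *; lra. lra. }
  destruct (Hc w (q / 12)) as [al [Hal Hal2]]. unfold q; lra.
  simpl in Hal2. unfold R_dist in Hal2.
  assert (Hnear : forall x, Rabs (x - w) < al -> q / 4 <= phi x <= q / 2).
  { intros x Hx. destruct (Req_dec x w) as [->|Hne]. unfold q in *; lra.
    assert (Rabs (phi x - phi w) < q / 12) by (apply Hal2; split; [split; [exact I|auto]|auto]).
    apply Rabs_def2 in H. unfold q in *; lra. }
  set (eta := Rmin al (Rmin w (y - w)) / 2).
  assert (He : 0 < eta /\ eta < al /\ eta < w /\ eta < y - w).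
  { unfold eta. pose proof (Rmin_l al (Rmin w (y - w))). pose proof (Rmin_r al (Rmin w (y - w))).
    pose proof (Rmin_l w (y - w)). pose proof (Rmin_r w (y - w)).
    assert (0 < Rmin al (Rmin w (y - w))) by (repeat apply Rmin_pos; lra). lra. }
  set (alpha := q / 4 / P).
  assert (Halpha : 0 < alpha) by (unfold alpha; apply Rdiv_lt_0_compat; unfold q in *; lra).
  assert (Hl2 : 0 < ln 2) by (pose proof ln_lt_2; lra).
  exists (2 * eta * (alpha * ln 2)). split.
  { apply Rmult_lt_0_compat. lra. apply Rmult_lt_0_compat; lra. }
  intros t Ht. assert (Hgt : good phi) by exact Hg.
  assert (Hqt : q <= phi t) by (apply Hm; lra). assert (HtP : phi t <= P) by (apply Hm; lra).
  rewrite E_eq by (auto; lra).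
  set (h := fun x => xlnx (phi x / phi t)).
  assert (Hh : forall u v, ex_RInt h u v) by (intros; apply integrand_ex, Hgt).
  rewrite (Chasles3 h 0 (w - eta) t Hh), (Chasles3 h (w - eta) (w + eta) t Hh).
  assert (H1 : RInt h 0 (w - eta) <= RInt (fun _ => 0) 0 (w - eta)).
  { apply RInt_le. lra. apply Hh. apply ex_RInt_const.
    intros x Hx. apply xlnx_nonpos, ratio01; auto; unfold q in *; lra. }
  assert (H3 : RInt h (w + eta) t <= RInt (fun _ => 0) (w + eta) t).
  { apply RInt_le. lra. apply Hh. apply ex_RInt_const.
    intros x Hx. apply xlnx_nonpos, ratio01; auto; unfold q in *; lra. }
  assert (H2 : RInt h (w - eta) (w + eta) <= RInt (fun _ => - (alpha * ln 2)) (w - eta) (w + eta)).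
  { apply RInt_le. lra. apply Hh. apply ex_RInt_const.
    intros x Hx. assert (Hx2 : Rabs (x - w) < al) by (apply Rabs_def1; lra).
    destruct (Hnear x Hx2) as [Ha Hb].
    apply xlnx_upper.
    - split. lra. unfold alpha. apply div_le_div; try (unfold q in *; lra).
      assert (q / 4 * phi t <= phi x * P). { apply Rmult_le_compat; unfold q in *; lra. } lra.
    - replace (/ 2) with (1 / 2) by field. apply div_le_div; unfold q in *; lra. }
  rewrite !RInt_R_const in H1, H2, H3. lra.
Qed.

Lemma Contra phi phi' y z : good phi -> good phi' -> 0 <= y <= z -> phi y = 0 -> 0 < phi z ->
  0 < phi' y ->
  (forall t, y <= t <= z -> 0 < phi t -> 0 < phi' t -> E phi' t <= E phi t) -> False.
Proof.
  intros Hg Hg' Hyz Hy0 Hz Hy' HX.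
  destruct (Lower phi' y z Hg' Hyz Hy') as [k [Hk Hk2]].
  set (hh := k / 2).
  assert (Hind : forall n : nat, phi (Rmin (y + INR n * hh) z) = 0 \/
     exists p t, y <= p /\ p <= t /\ t <= z /\ t - p <= hh /\ phi p = 0 /\ 0 < phi t).
  { induction n as [|n IH].
    - left. simpl. rewrite Rmult_0_l, Rplus_0_r, Rmin_left by lra. auto.
    - destruct IH as [IH|IH]; [|right; exact IH].
      set (p := Rmin (y + INR n * hh) z) in *.
      rewrite S_INR. set (t := Rmin (y + (INR n + 1) * hh) z).
      pose proof (pos_INR n).
      assert (Hp : y <= p /\ p <= t /\ t <= z /\ t - p <= hh).
      { unfold p, t, Rmin. assert (0 < hh) by (unfold hh; lra).
        assert (0 <= INR n * hh) by (apply Rmult_le_pos; lra).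
        destruct (Rle_dec (y + INR n * hh) z); destruct (Rle_dec (y + (INR n + 1) * hh) z); nra. }
      destruct (Rle_lt_or_eq_dec 0 (phi t) (good_nonneg _ Hg t)) as [Hpos|Heq].
      + right. exists p, t. tauto.
      + left. auto. }
  destruct (INR_archimed hh (z - y)) as [n Hn]. unfold hh; lra.
  destruct (Hind n) as [H|[p [t [H1 [H2 [H3 [H4 [H5 H6]]]]]]]].
  - rewrite Rmin_right in H by lra. lra.
  - assert (Ht' : 0 < phi' t). { destruct Hg' as [Hm' _]. pose proof (Hm' y t ltac:(lra)). lra. }
    pose proof (HX t ltac:(lra) H6 Ht').
    pose proof (Upper phi p t Hg ltac:(lra) H5 H6).
    pose proof (Hk2 t ltac:(lra)). unfold hh in H4. lra.
Qed.

Lemma trans1 F G a1 a2 c1 c2 : ac_nonneg_cdf F -> 0 < a1 -> 0 <= c1 ->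
  (forall y1 y2, G y1 y2 = F ((y1 - c1) / a1) ((y2 - c2) / a2)) ->
  forall t1 t2, c1 <= t1 -> cdcpe1 G t1 t2 = a1 * cdcpe1 F ((t1 - c1) / a1) ((t2 - c2) / a2).
Proof.
  intros HF Ha Hc HG t1 t2 Ht.
  change (E (fun u => G u t2) t1 = a1 * E (fun v => F v ((t2 - c2) / a2)) ((t1 - c1) / a1)).
  replace (fun u => G u t2) with (fun u => (fun v => F v ((t2 - c2) / a2)) ((u - c1) / a1)).
  2: { apply functional_extensionality. intro u. rewrite HG. reflexivity. }
  apply (Scale (fun v => F v ((t2 - c2) / a2)) a1 c1 t1); auto. apply ac_good1, HF.
Qed.

Lemma trans2 F G a1 a2 c1 c2 : ac_nonneg_cdf F -> 0 < a2 -> 0 <= c2 ->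
  (forall y1 y2, G y1 y2 = F ((y1 - c1) / a1) ((y2 - c2) / a2)) ->
  forall t1 t2, c2 <= t2 -> cdcpe2 G t1 t2 = a2 * cdcpe2 F ((t1 - c1) / a1) ((t2 - c2) / a2).
Proof.
  intros HF Ha Hc HG t1 t2 Ht.
  change (E (fun u => G t1 u) t2 = a2 * E (fun v => F ((t1 - c1) / a1) v) ((t2 - c2) / a2)).
  replace (fun u => G t1 u) with (fun u => (fun v => F ((t1 - c1) / a1) v) ((u - c2) / a2)).
  2: { apply functional_extensionality. intro u. rewrite HG. reflexivity. }
  apply (Scale (fun v => F ((t1 - c1) / a1) v) a2 c2 t2); auto. apply ac_good2, HF.
Qed.

Lemma core F F' s1 s2 s1' s2' : ac_nonneg_cdf F -> ac_nonneg_cdf F' -> cdcpe_le F F' ->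
  cdcpe_increasing F \/ cdcpe_increasing F' ->
  0 <= s1' <= s1 -> 0 <= s2' <= s2 -> 0 < F s1 s2 -> 0 < F' s1' s2' ->
  cdcpe1 F' s1' s2' <= cdcpe1 F s1 s2 /\ cdcpe2 F' s1' s2' <= cdcpe2 F s1 s2.
Proof.
  intros HF HF' HX Hmono H1 H2 Hs Hs'.
  assert (M1 : forall G, ac_nonneg_cdf G -> forall u v w, u <= v -> G u w <= G v w).
  { intros G HG u v w. destruct (ac_good1 G HG w) as [Hm _]. apply Hm. }
  assert (M2 : forall G, ac_nonneg_cdf G -> forall u v w, u <= v -> G w u <= G w v).
  { intros G HG u v w. destruct (ac_good2 G HG w) as [Hm _]. apply Hm. }
  pose proof (M1 F' HF' s1' s1 s2' ltac:(lra)) as A1.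
  pose proof (M2 F' HF' s2' s2 s1 ltac:(lra)) as A2.
  destruct Hmono as [[hm1 hm2]|[hm1 hm2]].
  - assert (Fpos : 0 < F s1' s2').
    { destruct (Rle_lt_or_eq_dec 0 (F s1' s2') (good_nonneg _ (ac_good1 F HF s2') s1')) as [P|P]; auto.
      exfalso.
      destruct (Rle_lt_or_eq_dec 0 (F s1 s2') (good_nonneg _ (ac_good1 F HF s2') s1)) as [Q|Q].
      - apply (Contra (fun u => F u s2') (fun u => F' u s2') s1' s1); auto using ac_good1.
        intros t Ht P1 P2. exact (proj1 (HX t s2' ltac:(lra) ltac:(lra) P1 P2)).
      - apply (Contra (fun u => F s1 u) (fun u => F' s1 u) s2' s2); auto using ac_good2.
        simpl. lra.
        intros t Ht P1 P2. exact (proj2 (HX s1 t ltac:(lra) ltac:(lra) P1 P2)). }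
    pose proof (M1 F HF s1' s1 s2' ltac:(lra)).
    destruct (HX s1' s2' ltac:(lra) ltac:(lra) Fpos Hs').
    destruct (hm1 s1' s1 s2' Fpos ltac:(lra)).
    destruct (hm2 s1 s2' s2 ltac:(lra) ltac:(lra)).
    split; lra.
  - destruct (hm1 s1' s1 s2' Hs' ltac:(lra)).
    destruct (hm2 s1 s2' s2 ltac:(lra) ltac:(lra)).
    destruct (HX s1 s2 ltac:(lra) ltac:(lra) Hs ltac:(lra)).
    split; lra.
Qed.

Theorem theorem3p8 (F F' G G' : R -> R -> R) (a1 a2 c1 c2 d1 d2 : R)
  (hF : ac_nonneg_cdf F) (hF' : ac_nonneg_cdf F')
  (hG : ac_nonneg_cdf G) (hG' : ac_nonneg_cdf G')
  (ha1 : 0 < a1) (ha2 : 0 < a2) (hc1 : 0 < c1) (hc2 : 0 < c2)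
  (hcd1 : c1 <= d1) (hcd2 : c2 <= d2)
  (hGF : forall y1 y2, G y1 y2 = F ((y1 - c1) / a1) ((y2 - c2) / a2))
  (hGF' : forall y1 y2, G' y1 y2 = F' ((y1 - d1) / a1) ((y2 - d2) / a2))
  (hXX' : cdcpe_le F F')
  (hmono : cdcpe_increasing F \/ cdcpe_increasing F') :
  forall t1 t2, d1 <= t1 -> d2 <= t2 -> 0 < G t1 t2 -> 0 < G' t1 t2 ->
    cdcpe1 G' t1 t2 <= cdcpe1 G t1 t2 /\ cdcpe2 G' t1 t2 <= cdcpe2 G t1 t2.
Proof.
  intros t1 t2 Ht1 Ht2 HG HG'.
  rewrite (trans1 F G a1 a2 c1 c2), (trans1 F' G' a1 a2 d1 d2),
    (trans2 F G a1 a2 c1 c2), (trans2 F' G' a1 a2 d1 d2); auto; try lra.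
  rewrite hGF in HG. rewrite hGF' in HG'.
  assert (D : forall a c d t, 0 < a -> c <= d -> d <= t -> 0 <= (t - d) / a <= (t - c) / a).
  { intros a c d t Ha Hcd Hdt. pose proof (Rinv_0_lt_compat _ Ha). unfold Rdiv. split.
    apply Rmult_le_pos; lra. apply Rmult_le_compat_r; lra. }
  destruct (core F F' ((t1 - c1) / a1) ((t2 - c2) / a2) ((t1 - d1) / a1) ((t2 - d2) / a2))
    as [K1 K2]; auto.
  split; apply Rmult_le_compat_l; lra.
Qed.
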